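(* Let $(\Lambda W,d)$ be a Sullivan algebra over $\mathbb{Q}$ with $W$ concentrated in odd degrees. Suppose $W$ admits a basis $w_1,\ldots,w_n$ such that for every $1\leq i\leq n$ the element $d w_i$ is a monomial in the $w_j$, i.e. a scalar multiple (possibly zero) of a product $w_{j_1}w_{j_2}\cdots w_{j_m}$ of basis elements. Then $(\Lambda W,d)$ satisfies the Hilali conjecture, i.e. $$\dim H(\Lambda W,d)\geq \dim W.$$
   Context: $\Lambda W$ denotes the free graded-commutative algebra on the graded vector space $W$; a Sullivan algebra is such an algebra with a differential $d$ of degree $+1$ satisfying the usual Sullivan (nilpotence/filtration) condition. *)

(* Defs.v *)
(* Exterior (= free graded-commutative, all generators odd)
   algebra Lambda(w_1,...,w_n) over Q, realised as the Q-vector space with basis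
   the monomials w_S = w_{s_1} ... w_{s_k}  (s_1 < ... < s_k), S : {set 'I_n}. *)
From HB Require Import structures.
From mathcomp Require Import all_boot all_order all_algebra.
Set Implicit Arguments. Unset Strict Implicit. Unset Printing Implicit Defensive.
Import Order.TTheory GRing.Theory Num.Theory.
Local Open Scope ring_scope.

Definition LW (n : nat) := {ffun {set 'I_n} -> rat^o}.

Definition mono n (S : {set 'I_n}) : LW n := [ffun T => (T == S)%:R].

Definition gen n (i : 'I_n) : LW n := mono [set i].

(* Koszul sign of  w_S * w_T = sgn S T w_(S u T)  for disjoint S, T *)
Definition wsign n (S T : {set 'I_n}) : rat :=
  (-1) ^+ #|[set p : 'I_n * 'I_n | (p.1 \in S) && (p.2 \in T) && (p.2 < p.1)%N]|.

Definition lmul n (x y : LW n) : LW n :=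
  \sum_(S : {set 'I_n}) \sum_(T : {set 'I_n})
     (x S * y T * (if [disjoint S & T] then wsign S T else 0)) *: mono (S :|: T).

Definition lprod n (s : seq (LW n)) : LW n := foldr (@lmul n) (mono set0) s.

Definition wdeg n (deg : 'I_n -> nat) (S : {set 'I_n}) : nat := \sum_(i in S) deg i.

Definition homog n (deg : 'I_n -> nat) (p : nat) (x : LW n) : Prop :=
  forall S, x S != 0 -> wdeg deg S = p.

Definition Wsp n : {vspace LW n} := <<[seq gen i | i : 'I_n]>>%VS.

(* Lambda V for a subspace V of W: subalgebra generated by V, i.e. the span of
   all products of (sub-families of) a basis of V *)
Definition Lam n (V : {vspace LW n}) : {vspace LW n} :=
  <<[seq lprod (mask (tval t) (vbasis V)) | t : (\dim V).-tuple bool]>>%VS.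

Definition sullivan_algebra n (deg : 'I_n -> nat) (d : 'End(LW n)) : Prop :=
  (forall p x, homog deg p x -> homog deg p.+1 (d x)) /\
  (forall p x y, homog deg p x ->
      d (lmul x y) = lmul (d x) y + (-1) ^+ p *: lmul x (d y)) /\
  (forall x, d (d x) = 0) /\
  (* Sullivan condition: W = U_k W(k), W(0) <= W(1) <= ..., d W(0) = 0,
     d W(k) <= Lambda W(k-1); W finite dimensional so the union is some W(N) *)
  (exists Wf : nat -> {vspace LW n},
      (forall k, (Wf k <= Wf k.+1)%VS) /\
      (forall k, (Wf k <= Wsp n)%VS) /\
      (exists N, Wf N = Wsp n) /\
      (forall x, x \in Wf 0%N -> d x = 0) /\
      (forall k x, x \in Wf k.+1 -> d x \in Lam (Wf k))).

(* dim H(Lambda W, d) = dim ker d - dim im d  (im d <= ker d since d^2 = 0) *)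
Definition cohom_dim n (d : 'End(LW n)) : nat := (\dim (lker d) - \dim (limg d))%N.

(* Main.v *)
Require Import Defs.
From HB Require Import structures.
From mathcomp Require Import all_boot all_order all_algebra.
From mathcomp Require Import zify ring.
Import GRing.Theory.
Set Implicit Arguments. Unset Strict Implicit. Unset Printing Implicit Defensive.

Section Comb.
Variable n : nat.
Variable J : 'I_n -> {set 'I_n}.
Variable act : pred 'I_n.
Variable r : 'I_n -> nat.
Hypothesis Hr : forall i m, act i -> m \in J i -> r m < r i.
Hypothesis HJ2 : forall i, act i -> exists x y, [/\ x != y, x \in J i & y \in J i].

Definition validD (D T : {set 'I_n}) : bool :=
  [&& T \subset D,
      [forall i in T, act i ==> ~~ [disjoint J i & T]] &
      [forall i in D :\: T, act i ==> ~~ (J i \subset T)]].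

Definition downc (D : {set 'I_n}) : bool := [forall i in D, act i ==> (J i \subset D)].

Lemma Jne i : act i -> J i != set0.
Proof.
move=> ai; have [x [y [_ xJ _]]] := HJ2 ai.
by apply/set0Pn; exists x.
Qed.

Lemma notJself i : act i -> i \notin J i.
Proof. by move=> ai; apply/negP => /(Hr ai); rewrite ltnn. Qed.

Lemma valid0 D : downc D -> validD D set0.
Proof.
move=> _; rewrite /validD sub0set; apply/and3P; split => //.
  by apply/forall_inP => i; rewrite inE.
apply/forall_inP => i _; apply/implyP => ai.
by rewrite subset0 Jne.
Qed.

Lemma validfull D : downc D -> validD D D.
Proof.
move=> dD; rewrite /validD subxx; apply/and3P; split => //.
  apply/forall_inP => i iD; apply/implyP => ai.
  have JD : J i \subset D by move/forall_inP: dD => /(_ i iD) /implyP; apply.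
  apply/negP => dis.
  have /set0Pn [x xJ] := Jne ai.
  by move: (disjointFr dis xJ); rewrite (subsetP JD).
by apply/forall_inP => i; rewrite setDv inE.
Qed.

Section Top.
Variables (D : {set 'I_n}) (m : 'I_n).
Hypothesis dD : downc D.
Hypothesis mD : m \in D.
Hypothesis mtop : forall i, i \in D -> r i <= r m.

Let D' := D :\ m.

Lemma top_notin i : i \in D -> act i -> m \notin J i.
Proof.
move=> iD ai; apply/negP => /(Hr ai) lt.
by have := mtop iD; rewrite leqNgt lt.
Qed.

Lemma downc_D' : downc D'.
Proof.
apply/forall_inP => i; rewrite !inE => /andP [im iD]; apply/implyP => ai.
apply/subsetP => x xJ; rewrite !inE.
have JD : J i \subset D by move/forall_inP: dD => /(_ i iD) /implyP; apply.
rewrite (subsetP JD) // andbT; apply/eqP => exm.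
by move: (top_notin iD ai); rewrite -exm xJ.
Qed.

Lemma Jm_sub : act m -> J m \subset D'.
Proof.
move=> am; apply/subsetP => x xJ; rewrite !inE.
have JD : J m \subset D by move/forall_inP: dD => /(_ m mD) /implyP; apply.
rewrite (subsetP JD) // andbT; apply/eqP => exm.
by move: xJ; rewrite exm (negbTE (notJself am)).
Qed.

Lemma ext_out T : validD D' T -> (act m -> ~~ (J m \subset T)) -> validD D T.
Proof.
case/and3P => TD cl un hm; apply/and3P; split => //.
  by apply: subset_trans TD _; apply: subD1set.
apply/forall_inP => i; rewrite inE => /andP [iT iD]; apply/implyP => ai.
have [eim | im] := eqVneq i m.
  by move: ai; rewrite eim => ai; exact: hm ai.
by move/forall_inP: un => /(_ i); rewrite !inE iT im iD => /(_ isT) /implyP; apply.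
Qed.

Lemma ext_in T : validD D' T -> (act m -> ~~ [disjoint J m & T]) -> validD D (m |: T).
Proof.
case/and3P => TD cl un hm; apply/and3P; split.
- rewrite subUset sub1set mD; apply: subset_trans TD _; exact: subD1set.
- apply/forall_inP => i; rewrite !inE => /orP [/eqP -> | iT]; apply/implyP => ai.
    apply: contra (hm ai); apply: disjointWr; exact: subsetUr.
  have := forall_inP cl i iT; move/implyP => /(_ ai); apply: contra.
  apply: disjointWr; exact: subsetUr.
- apply/forall_inP => i; rewrite !inE negb_or => /andP [/andP [im iT] iD].
  apply/implyP => ai.
  have := forall_inP un i; rewrite !inE iT im iD => /(_ isT) /implyP /(_ ai).
  apply: contra => sub; apply/subsetP => x xJ.
  have := subsetP sub x xJ; rewrite !inE => /orP [/eqP exm | //].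
  by move: xJ; rewrite exm (negbTE (top_notin iD ai)).
Qed.

End Top.

Lemma exists_top D : D != set0 -> exists m, m \in D /\ forall i, i \in D -> r i <= r m.
Proof.
case/set0Pn => i0 i0D.
case: (@arg_maxnP _ i0 (mem D) r i0D) => m mD mx.
by exists m.
Qed.

Lemma separation k : forall D : {set 'I_n}, #|D| = k -> downc D ->
  forall a b, a \in D -> b \in D -> a != b ->
  exists T, [/\ validD D T, a \in T & b \notin T].
Proof.
elim: k => [|k IH] D cD dD a b aD bD ab.
  by move/eqP: cD; rewrite cards_eq0 => /eqP D0; move: aD; rewrite D0 inE.
have Dn0 : D != set0 by apply/set0Pn; exists a.
have [m [mD mtop]] := exists_top Dn0.
set D' := D :\ m.
have cD' : #|D'| = k by move: cD; rewrite /D' (cardsD1 m D) mD => -[].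
have dD' := downc_D' dD mtop.
case: (eqVneq a m) => [eam | am].
  subst a.
  have bD' : b \in D' by rewrite /D' !inE bD andbT eq_sym.
  case: (boolP (act m)) => actm.
    have [x [y [xy xJ yJ]]] := HJ2 actm.
    have [c [cJ cb]] : exists c, c \in J m /\ c != b.
      case: (eqVneq x b) => [xb|xb]; last by exists x.
      by exists y; split => //; rewrite -xb eq_sym.
    have cD2 : c \in D' by exact: (subsetP (Jm_sub dD mD actm) c cJ).
    have [T [vT cT bT]] := IH D' cD' dD' c b cD2 bD' cb.
    exists (m |: T); split.
    - apply: (ext_in mD mtop) => // _; apply/negP => dis.
      by move: (disjointFr dis cJ); rewrite cT.
    - by rewrite setU11.
    - by rewrite !inE negb_or bT andbT eq_sym.
  exists (m |: set0); split.
  - by apply: (ext_in mD mtop) => //; [apply: valid0 | rewrite (negbTE actm)].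
  - by rewrite setU11.
  - by rewrite !inE orbF eq_sym.
have aD' : a \in D' by rewrite !inE am aD.
case: (eqVneq b m) => [ebm | bm].
  subst b.
  case: (boolP (act m)) => actm.
    have [x [y [xy xJ yJ]]] := HJ2 actm.
    have [c [cJ ca]] : exists c, c \in J m /\ c != a.
      case: (eqVneq x a) => [xa|xa]; last by exists x.
      by exists y; split => //; rewrite -xa eq_sym.
    have cD2 : c \in D' by exact: (subsetP (Jm_sub dD mD actm) c cJ).
    have ac : a != c by rewrite eq_sym.
    have [T [vT aT cT]] := IH D' cD' dD' a c aD' cD2 ac.
    exists T; split => //.
    - apply: (@ext_out D m) => // _; apply/negP => sub.
      by move: (subsetP sub c cJ); rewrite (negbTE cT).
    - apply/negP => mT.
      by case/and3P: vT => sub _ _; have := subsetP sub m mT; rewrite !inE eqxx.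
  exists D'; split.
  - by apply: (@ext_out D m) => //; [apply: validfull | rewrite (negbTE actm)].
  - by [].
  - by rewrite !inE eqxx.
have bD' : b \in D' by rewrite !inE bm bD.
have [T [vT aT bT]] := IH D' cD' dD' a b aD' bD' ab.
case: (boolP (act m && ~~ [disjoint J m & T])) => h.
  exists (m |: T); split.
  - by apply: (ext_in mD mtop) => // _; case/andP: h.
  - by rewrite !inE aT orbT.
  - by rewrite !inE negb_or bT andbT.
exists T; split => //.
apply: (@ext_out D m) => // actm; move: h; rewrite actm /= negbK => dis.
apply/negP => sub; have /set0Pn [x xJ] := Jne actm.
by move: (disjointFr dis xJ); rewrite (subsetP sub).
Qed.


Lemma count_valid k : forall D : {set 'I_n}, #|D| = k -> downc D ->
  k < #|[set T : {set 'I_n} | validD D T]|.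
Proof.
elim: k => [|k IH] D cD dD.
  rewrite card_gt0; apply/set0Pn; exists set0; rewrite inE; exact: valid0.
have Dn0 : D != set0 by rewrite -card_gt0 cD.
have [m [mD mtop]] := exists_top Dn0.
set D' := D :\ m.
have cD' : #|D'| = k by move: cD; rewrite /D' (cardsD1 m D) mD => -[].
have dD' := downc_D' dD mtop.
have IH' := IH D' cD' dD'.
set VD' := [set T : {set 'I_n} | validD D' T] in IH'.
set X1 := [set T : {set 'I_n} | validD D' T && (act m ==> ~~ (J m \subset T))].
set X2 := [set T : {set 'I_n} | validD D' T && (act m ==> ~~ [disjoint J m & T])].
have notm T : validD D' T -> m \notin T.
  case/and3P => sub _ _; apply/negP => mT.
  by have := subsetP sub m mT; rewrite !inE eqxx.
have sub1 : X1 :|: [set m |: T | T in X2] \subset [set T | validD D T].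
  apply/subsetP => T; rewrite in_setU => /orP [].
    rewrite !inE => /andP [vT h].
    by apply: (@ext_out D m) => // am; move: h; rewrite am.
  case/imsetP => T' T'X ->; rewrite inE.
  move: T'X; rewrite inE => /andP [vT h].
  by apply: (ext_in mD mtop) => // am; move: h; rewrite am.
have dis : X1 :&: [set m |: T | T in X2] = set0.
  apply/setP => T; rewrite in_set0 in_setI; apply/negP => /andP [].
  rewrite inE => /andP [vT _] /imsetP [T' _ eT].
  by move: (notm _ vT); rewrite eT setU11.
have cimg : #|[set m |: T | T in X2]| = #|X2|.
  apply: card_in_imset => T1 T2; rewrite !inE => /andP [v1 _] /andP [v2 _] e.
  by rewrite -(setU1K (notm _ v1)) e setU1K ?notm.
have U12 : VD' \subset X1 :|: X2.
  apply/subsetP => T; rewrite !inE => vT; rewrite vT /=.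
  case: (boolP (act m)) => //= am.
  rewrite -negb_and; apply/negP => /andP [sub dis2].
  have /set0Pn [x xJ] := Jne am.
  by move: (disjointFr dis2 xJ); rewrite (subsetP sub).
have I12 : 0 < #|X1 :&: X2|.
  rewrite card_gt0; apply/set0Pn.
  case: (boolP (act m)) => am.
    have [x [y [xy xJ yJ]]] := HJ2 am.
    have xD : x \in D' by exact: (subsetP (Jm_sub dD mD am) x xJ).
    have yD : y \in D' by exact: (subsetP (Jm_sub dD mD am) y yJ).
    have [T [vT xT yT]] := separation cD' dD' xD yD xy.
    exists T; rewrite !inE vT am /=; apply/andP; split.
      by apply/negP => sub; move: (subsetP sub y yJ); rewrite (negbTE yT).
    by apply/negP => dis2; move: (disjointFr dis2 xJ); rewrite xT.
  by exists set0; rewrite !inE (negbTE am) /= andbT valid0.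
have := cardsUI X1 X2.
have := subset_leq_card U12.
have := subset_leq_card sub1.
rewrite cardsU dis cards0 subn0 cimg.
move: IH'; rewrite -/VD'.
move: I12; set a := #|X1 :&: X2|; set b := #|X1 :|: X2|.
set c := #|X1|; set e := #|X2|; set f := #|VD'|; set g := #|[set T | validD D T]|.
lia.
Qed.

End Comb.

Local Open Scope ring_scope.

Section Alg.
Variable n : nat.
Implicit Types (S T U : {set 'I_n}) (x y z : LW n).

Definition sg S T : rat := if [disjoint S & T] then wsign S T else 0.

Lemma monoE S T : mono S T = (T == S)%:R.
Proof. by rewrite /mono ffunE. Qed.

Lemma scaleE (c : rat) x U : (c *: x) U = c * x U.
Proof. by rewrite ffunE. Qed.

Lemma addE x y U : (x + y) U = x U + y U.
Proof. by rewrite ffunE. Qed.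

Lemma lmulE x y U : lmul x y U =
  \sum_S \sum_T x S * y T * sg S T * (U == S :|: T)%:R.
Proof.
rewrite /lmul sum_ffunE; apply: eq_bigr => S _; rewrite sum_ffunE.
by apply: eq_bigr => T _; rewrite scaleE monoE.
Qed.


Lemma sum_nz (I : finType) (F : I -> rat) : \sum_i F i != 0 -> exists i, F i != 0.
Proof.
move=> h; apply/existsP; apply: contraR h; rewrite negb_exists => /forallP h.
by apply/eqP; apply: big1 => i _; apply/eqP; rewrite -[_ == _]negbK h.
Qed.

Lemma sum_delta (F : {set 'I_n} -> rat) U : \sum_T F T * (U == T)%:R = F U.
Proof.
rewrite (bigD1 U) //= eqxx mulr1 big1 ?addr0 // => T /negbTE.
by rewrite eq_sym => ->; rewrite mulr0.
Qed.

Lemma sum_delta' (F : {set 'I_n} -> rat) U : \sum_T (T == U)%:R * F T = F U.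
Proof.
rewrite (bigD1 U) //= eqxx mul1r big1 ?addr0 // => T /negbTE.
by move=> ->; rewrite mul0r.
Qed.

Lemma sg_nz S T : sg S T != 0 -> [disjoint S & T].
Proof. by rewrite /sg; case: ifP => // _; rewrite eqxx. Qed.

Lemma wsign_nz S T : wsign S T != 0.
Proof. by rewrite /wsign expf_neq0 // oppr_eq0 oner_eq0. Qed.

Lemma supp_lmul x y U : lmul x y U != 0 ->
  exists S T, [/\ x S != 0, y T != 0, [disjoint S & T] & U = S :|: T].
Proof.
rewrite lmulE => /sum_nz [S] /sum_nz [T].
rewrite !mulf_eq0 !negb_or => /andP [/andP [/andP [xS yT] sST] e].
exists S, T; split => //; first exact: sg_nz.
by apply/eqP; move: e; case: (U == _).
Qed.

Lemma lmul_mono S0 T0 : lmul (mono S0) (mono T0) = sg S0 T0 *: mono (S0 :|: T0).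
Proof.
apply/ffunP => U; rewrite lmulE scaleE monoE.
rewrite (bigD1 S0) //= [X in _ + X]big1 ?addr0; last first.
  by move=> S /negbTE SS0; apply: big1 => T _; rewrite monoE SS0 !mul0r.
rewrite (bigD1 T0) //= [X in _ + X]big1 ?addr0; last first.
  by move=> T /negbTE TT0; rewrite !monoE TT0 mulr0n mulr0 !mul0r.
by rewrite !monoE !eqxx !mul1r.
Qed.

Lemma wsign0l T : wsign set0 T = 1.
Proof.
rewrite /wsign; set A := [set _ | _].
suff -> : A = set0 by rewrite cards0 expr0.
by apply/setP => p; rewrite !inE.
Qed.

Lemma wsign0r S : wsign S set0 = 1.
Proof.
rewrite /wsign; set A := [set _ | _].
suff -> : A = set0 by rewrite cards0 expr0.
by apply/setP => p; rewrite !inE andbF.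
Qed.

Lemma sg0l T : sg set0 T = 1.
Proof. by rewrite /sg disjoints_subset sub0set wsign0l. Qed.

Lemma sg0r S : sg S set0 = 1.
Proof. by rewrite /sg disjoint_sym disjoints_subset sub0set wsign0r. Qed.

Lemma lmul1x y : lmul (mono set0) y = y.
Proof.
apply/ffunP => U; rewrite lmulE (bigD1 set0) //= [X in _ + X]big1 ?addr0; last first.
  by move=> S /negbTE SS0; apply: big1 => T _; rewrite monoE SS0 !mul0r.
rewrite monoE eqxx mulr1n -(sum_delta (fun T => y T)); apply: eq_bigr => T _.
by rewrite mul1r sg0l set0U mulr1.
Qed.

Lemma lmulx1 x : lmul x (mono set0) = x.
Proof.
apply/ffunP => U; rewrite lmulE -(sum_delta (fun S => x S)); apply: eq_bigr => S _.
rewrite (bigD1 set0) //= [X in _ + X]big1 ?addr0; last first.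
  by move=> T /negbTE TS0; rewrite monoE TS0 mulr0 !mul0r.
by rewrite monoE eqxx mulr1n sg0r setU0 !mulr1.
Qed.


Definition supp (P : {set 'I_n} -> Prop) x := forall S, x S != 0 -> P S.

Lemma span_supp P (X : seq (LW n)) v : v \in <<X>>%VS ->
  (forall y, y \in X -> supp P y) -> supp P v.
Proof.
move=> vX h S vS.
have e := @coord_span _ _ _ (in_tuple X) v vX.
move: vS; rewrite e sum_ffunE => /sum_nz [i]; rewrite scaleE mulf_eq0 negb_or.
case/andP => _; apply: h; apply: mem_nth; exact: ltn_ord.
Qed.

Lemma decomp x : x = \sum_S x S *: mono S.
Proof.
apply/ffunP => U; rewrite sum_ffunE.
rewrite -[LHS](sum_delta (fun S => x S)); apply: eq_bigr => S _.
by rewrite scaleE monoE.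
Qed.

Definition sing S := exists j, S = [set j].

Lemma mono_nz S T : mono S T != 0 -> T = S.
Proof. by rewrite /mono ffunE; case: (T =P S). Qed.

Lemma gen_supp j : supp sing (gen j).
Proof. by move=> S /mono_nz ->; exists j. Qed.

Lemma Wsp_supp x : x \in Wsp n -> supp sing x.
Proof.
move=> xW; apply: (span_supp xW) => y /mapP [j _ ->]; exact: gen_supp.
Qed.

Lemma sing_decomp x : supp sing x -> x = \sum_j x [set j] *: gen j.
Proof.
move=> sx; apply/ffunP => U; rewrite sum_ffunE.
under eq_bigr do rewrite scaleE /gen monoE.
case: (boolP (x U == 0)) => [/eqP xU0 | xU].
  rewrite xU0; symmetry; apply: big1 => j _.
  case: eqP => [eU|]; last by rewrite mulr0.
  by rewrite -eU xU0 mul0r.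
have [j ->] := sx U xU.
rewrite (bigD1 j) //= eqxx mulr1 big1 ?addr0 // => l lj.
case: eqP => [/set1_inj e|]; last by rewrite mulr0.
by move: lj; rewrite e eqxx.
Qed.

Lemma sing_sum x (F : {set 'I_n} -> rat) : supp sing x ->
  \sum_S x S * F S = \sum_j x [set j] * F [set j].
Proof.
move=> sx; rewrite {1}(sing_decomp sx).
under eq_bigr do rewrite sum_ffunE mulr_suml.
rewrite exchange_big /=; apply: eq_bigr => j _.
rewrite -[RHS](sum_delta' (fun S => x [set j] * F S)); apply: eq_bigr => S _.
rewrite scaleE /gen monoE; ring.
Qed.


Lemma lprod_card (s : seq (LW n)) : (forall v, v \in s -> supp sing v) ->
  supp (fun S => #|S| = size s) (lprod s).
Proof.
elim: s => [|v s IH] hs S /=.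
  by move/mono_nz ->; rewrite cards0.
case/supp_lmul => [S0 [T [vS0 lT dis ->]]].
have [j eS0] := hs v (mem_head _ _) S0 vS0.
have IH' : forall w, w \in s -> supp sing w.
  by move=> w ws; apply: hs; rewrite inE ws orbT.
rewrite eS0 cardsU1 (IH IH' T lT).
by move: dis; rewrite eS0 disjoints1 => ->.
Qed.

Lemma lprod_gen (s : seq 'I_n) :
  supp (fun S => S = [set j in s]) (lprod [seq gen j | j <- s]).
Proof.
elim: s => [|j s IH] S /=.
  by move/mono_nz ->; apply/setP => x; rewrite !inE.
case/supp_lmul => [S0 [T [gS0 lT dis ->]]].
rewrite (mono_nz gS0) (IH _ lT); apply/setP => x; rewrite !inE.
done.
Qed.

Lemma sum_deltaI (F : 'I_n -> rat) (a : 'I_n) : \sum_j (j == a)%:R * F j = F a.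
Proof.
rewrite (bigD1 a) //= eqxx mul1r big1 ?addr0 // => j /negbTE ->.
by rewrite mul0r.
Qed.

Lemma wsign11 (j l : 'I_n) : wsign [set j] [set l] = (-1) ^+ (l < j)%N.
Proof.
rewrite /wsign; congr (_ ^+ _).
case: (ltnP l j) => h.
  rewrite /= -(cards1 (j, l)); apply: eq_card => -[p q]; rewrite !inE /=.
  apply/idP/idP => [/andP [/andP [/eqP -> /eqP ->] _] | /eqP [-> ->]] //.
  by rewrite !eqxx h.
rewrite /=; apply/eqP; rewrite cards_eq0; apply/eqP/setP => -[p q]; rewrite !inE /=.
apply/negP => /andP [/andP [/eqP -> /eqP ->]].
by rewrite ltnNge h.
Qed.

Lemma wsign_anti (a k : 'I_n) : a != k -> wsign [set k] [set a] = - wsign [set a] [set k].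
Proof.
move=> ak; rewrite !wsign11.
case: (ltngtP a k) => h; rewrite ?expr0 ?expr1 ?opprK //.
by move/val_inj: h => h; rewrite h eqxx in ak.
Qed.

Lemma wsign_sq (a k : 'I_n) : wsign [set a] [set k] * wsign [set a] [set k] = 1.
Proof. by rewrite wsign11; case: (k < a)%N; rewrite ?expr0 ?expr1 ?mulr1 ?mulrNN ?mulr1. Qed.

Lemma sg11 (j l : 'I_n) : sg [set j] [set l] = if j == l then 0 else wsign [set j] [set l].
Proof.
rewrite /sg disjoints1 inE.
by case: (j == l).
Qed.

Lemma set2_eq (a k j l : 'I_n) : a != k ->
  ([set a; k] == [set j; l]) = ((j == a) && (l == k)) || ((j == k) && (l == a)).
Proof.
move=> ak; apply/eqP/idP => [e|].
  have ja : j \in [set a; k] by rewrite e !inE eqxx.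
  have la : l \in [set a; k] by rewrite e !inE eqxx orbT.
  have aj : a \in [set j; l] by rewrite -e !inE eqxx.
  have kj : k \in [set j; l] by rewrite -e !inE eqxx orbT.
  move: ja la aj kj; rewrite !inE.
  case/orP => /eqP ->; case/orP => /eqP ->; rewrite ?eqxx ?andbT ?orbT //=.
    by rewrite eq_sym (negbTE ak).
  by rewrite (negbTE ak).
case/orP => /andP [/eqP -> /eqP ->] //.
by apply/setP => x; rewrite !inE orbC.
Qed.

Lemma lmul_sing x y U : supp sing x -> supp sing y ->
  lmul x y U = \sum_j \sum_l x [set j] * y [set l] * sg [set j] [set l] * (U == [set j; l])%:R.
Proof.
move=> sx sy; rewrite lmulE.
rewrite (eq_bigr (fun S => x S * (\sum_T y T * (sg S T * (U == S :|: T)%:R)))); last first.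
  by move=> S _; rewrite mulr_sumr; apply: eq_bigr => T _; rewrite !mulrA.
rewrite (sing_sum _ sx); apply: eq_bigr => j _.
rewrite (sing_sum _ sy) mulr_sumr; apply: eq_bigr => l _; rewrite !mulrA.
done.
Qed.

Lemma sum_deltaI' (F : 'I_n -> rat) (a : 'I_n) : \sum_j F j * (j == a)%:R = F a.
Proof.
rewrite -[RHS](sum_deltaI F a); apply: eq_bigr => j _; exact: mulrC.
Qed.

Lemma dsum2 (f : 'I_n -> 'I_n -> rat) (a k : 'I_n) : a != k ->
  \sum_j \sum_l f j l * ([set a; k] == [set j; l])%:R = f a k + f k a.
Proof.
move=> ak.
have inner j : \sum_l f j l * ([set a; k] == [set j; l])%:R =
    (j == a)%:R * f j k + (j == k)%:R * f j a.
  under eq_bigr => l _ do rewrite set2_eq //.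
  case: (eqVneq j a) => [->|ja].
    rewrite ?eqxx ?(negbTE ak) ?mulr1n ?mulr0n ?mul0r ?addr0 ?mul1r.
    rewrite -[RHS](sum_deltaI' (f a) k).
    by apply: eq_bigr => l _; rewrite andTb andFb orbF.
  case: (eqVneq j k) => [->|jk].
    rewrite ?eqxx ?(negbTE ja) ?mulr1n ?mulr0n ?mul0r ?add0r ?mul1r.
    rewrite -[RHS](sum_deltaI' (f k) a).
    by apply: eq_bigr => l _; rewrite andTb andFb.
  rewrite ?mulr0n ?mul0r ?addr0; apply: big1 => l _.
  by rewrite ?andFb ?mulr0n ?mulr0.
under eq_bigr => j _ do rewrite inner.
rewrite big_split /= sum_deltaI.
by rewrite (sum_deltaI (fun j => f j a) k).
Qed.

Lemma lmul_sing2 x y (a k : 'I_n) : supp sing x -> supp sing y -> a != k ->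
  lmul x y [set a; k] = wsign [set a] [set k] * (x [set a] * y [set k] - x [set k] * y [set a]).
Proof.
move=> sx sy ak; rewrite lmul_sing //.
rewrite (dsum2 (fun j l => x [set j] * y [set l] * sg [set j] [set l])) //.
rewrite !sg11 (negbTE ak) eq_sym (negbTE ak) (wsign_anti ak).
ring.
Qed.

Definition La (a : 'I_n) (y : LW n) : LW n :=
  \sum_(k | k != a) (wsign [set a] [set k] * y [set a; k]) *: gen k.

Lemma LaD a y1 y2 : La a (y1 + y2) = La a y1 + La a y2.
Proof.
rewrite /La -big_split /=; apply: eq_bigr => k _.
by rewrite addE mulrDr scalerDl.
Qed.

Lemma LaZ a (c : rat) y : La a (c *: y) = c *: La a y.
Proof.
rewrite /La scaler_sumr; apply: eq_bigr => k _.
by rewrite scaleE scalerA mulrCA.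
Qed.

Lemma La0 a : La a 0 = 0.
Proof. by have := LaZ a 0 0; rewrite !scale0r. Qed.

Lemma La_sum a (I : Type) (r : seq I) (P : pred I) (F : I -> LW n) :
  La a (\sum_(i <- r | P i) F i) = \sum_(i <- r | P i) La a (F i).
Proof. exact: (big_morph (La a) (LaD a) (La0 a)). Qed.

Lemma La_card2 a y : supp (fun S => #|S| <> 2) y -> La a y = 0.
Proof.
move=> sy; apply: big1 => k ka.
case: (eqVneq (y [set a; k]) 0) => [->|h]; first by rewrite mulr0 scale0r.
by have := sy _ h; rewrite cards2 eq_sym ka.
Qed.

Lemma La_lmul a x y : supp sing x -> supp sing y ->
  La a (lmul x y) = x [set a] *: y - y [set a] *: x.
Proof.
move=> sx sy.
have ey := sing_decomp sy; have ex := sing_decomp sx.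
transitivity (\sum_k (x [set a] * y [set k] - y [set a] * x [set k]) *: gen k).
  rewrite [RHS](bigD1 a) //= [x [set a] * _]mulrC subrr scale0r add0r.
  apply: eq_bigr => k ka; rewrite lmul_sing2 // 1?eq_sym //.
  by rewrite mulrA wsign_sq mul1r [x [set k] * _]mulrC.
set xa := x [set a]; set ya := y [set a].
rewrite {2}ey {2}ex !scaler_sumr -sumrB; apply: eq_bigr => k _.
by rewrite !scalerA scalerBl.
Qed.

Lemma La_lprod a (U : {vspace LW n}) (s : seq (LW n)) : (U <= Wsp n)%VS ->
  (forall v, v \in s -> v \in U) -> La a (lprod s) \in U.
Proof.
move=> UW hs.
have ss : forall v, v \in s -> supp sing v.
  by move=> v vs; apply: Wsp_supp; apply: (subvP UW); apply: hs.
case: (eqVneq (size s) 2) => [|s2]; last first.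
  rewrite La_card2 ?mem0v // => S /(lprod_card ss) ->; exact/eqP.
case: s hs ss => [|v1 [|v2 [|v3 s]]] //= hs ss _.
rewrite lmulx1 La_lmul; try by apply: ss; rewrite !inE eqxx ?orbT.
by rewrite memvB ?memvZ // hs // !inE eqxx ?orbT.
Qed.

Lemma La_Lam a (U : {vspace LW n}) y : (U <= Wsp n)%VS -> y \in Lam U -> La a y \in U.
Proof.
move=> UW yL.
have e := @coord_span _ _ _ (in_tuple _) y yL.
rewrite e La_sum; apply: memv_suml => i _; rewrite LaZ memvZ //.
set X := [seq _ | _ in _] in e *.
have : X`_i \in X by apply: mem_nth; exact: ltn_ord.
case/mapP => t _ ->; apply: La_lprod => // v /mem_mask; exact: vbasis_mem.
Qed.

End Alg.
Section Main.
Variables (n : nat) (deg : 'I_n -> nat) (d : 'End(LW n)).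
Hypothesis Hodd : forall i, odd (deg i).
Hypothesis Hhom : forall p x, homog deg p x -> homog deg p.+1 (d x).
Hypothesis Hleib : forall p x y, homog deg p x ->
      d (lmul x y) = lmul (d x) y + (-1) ^+ p *: lmul x (d y).
Hypothesis Hmon : forall i : 'I_n, exists (c : rat) (s : seq 'I_n),
      d (gen i) = c *: lprod [seq gen j | j <- s].

Definition J i : {set 'I_n} := odflt set0 [pick S | d (gen i) S != 0].
Definition act i : bool := d (gen i) != 0.

Lemma ffun_nz (x : LW n) : x != 0 -> exists S, x S != 0.
Proof.
move=> xn; apply/existsP; apply: contraR xn; rewrite negb_exists => /forallP h.
by apply/eqP/ffunP => S; rewrite ffunE; apply/eqP; rewrite -[_ == _]negbK h.
Qed.

Lemma F1 i S : d (gen i) S != 0 -> S = J i.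
Proof.
have [c [s e]] := Hmon i.
have key U : d (gen i) U != 0 -> U = [set j in s].
  rewrite e scaleE mulf_eq0 negb_or => /andP [_]; exact: lprod_gen.
move=> hS; rewrite /J; case: pickP => [S' hS'|h] /=.
  by rewrite (key _ hS) (key _ hS').
by move: (h S); rewrite hS.
Qed.

Lemma actJ i : act i -> d (gen i) (J i) != 0.
Proof. by move/ffun_nz => [S hS]; rewrite -(F1 hS). Qed.

Lemma act_of i S : d (gen i) S != 0 -> act i.
Proof. by apply: contraNneq => ->; rewrite ffunE. Qed.

Lemma dgenE i : d (gen i) = d (gen i) (J i) *: mono (J i).
Proof.
apply/ffunP => U; rewrite scaleE monoE.
case: (U =P J i) => [->|ne]; first by rewrite mulr1n mulr1.
rewrite mulr0n mulr0.
case: (eqVneq (d (gen i) U) 0) => // h.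
by case: ne; exact: F1 h.
Qed.

Lemma wdeg1 j : wdeg deg [set j] = deg j.
Proof. by rewrite /wdeg big_set1. Qed.

Lemma homog_gen i : homog deg (deg i) (gen i).
Proof. by move=> S /mono_nz ->; rewrite wdeg1. Qed.

Lemma homog_one : homog deg 0 (mono set0).
Proof. by move=> S /mono_nz ->; rewrite /wdeg big_set0. Qed.

Lemma wdegJ i : act i -> wdeg deg (J i) = (deg i).+1.
Proof. by move=> ai; have := Hhom (@homog_gen i); apply; apply: actJ. Qed.

Lemma deg_pos j : (0 < deg j)%N.
Proof. by have := Hodd j; case: (deg j). Qed.

Lemma wdeg_pos S : S != set0 -> (0 < wdeg deg S)%N.
Proof.
case/set0Pn => z zS; rewrite /wdeg (bigD1 z) //=.
by have := deg_pos z; lia.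
Qed.

Lemma J2 i : act i -> exists x y, [/\ x != y, x \in J i & y \in J i].
Proof.
move=> ai; have w := wdegJ ai.
have Jn : J i != set0 by apply/eqP => e; move: w; rewrite e /wdeg big_set0.
case/set0Pn: Jn => x xJ.
case: (eqVneq (J i :\ x) set0) => [e|].
  have e' : J i = [set x].
    by rewrite -(setD1K xJ) e setU0.
  move: w; rewrite e' wdeg1 => w.
  by have := Hodd x; rewrite w /= Hodd.
case/set0Pn => y; rewrite !inE => /andP [yx yJ].
by exists x, y; split => //; rewrite eq_sym.
Qed.

Lemma F4 i m : act i -> m \in J i -> (deg m <= deg i)%N /\
  (deg m = deg i -> exists a, a != m /\ J i = [set m; a]).
Proof.
move=> ai mJ; have w := wdegJ ai.
move: (w); rewrite /wdeg (bigD1 m) //= => w'.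
have [x [y [xy xJ yJ]]] := J2 ai.
have rn : J i :\ m != set0.
  apply/set0Pn; case: (eqVneq x m) => [xm|xm].
    by exists y; rewrite !inE yJ andbT -xm eq_sym.
  by exists x; rewrite !inE xJ xm.
have hp := wdeg_pos rn.
have e1 : (\sum_(j in J i | j != m) deg j = wdeg deg (J i :\ m))%N.
  by rewrite /wdeg; apply: eq_bigl => z; rewrite !inE andbC.
rewrite e1 in w'.
split; first by move: hp w'; lia.
move=> edeg.
case/set0Pn: (rn) => a aR.
have : wdeg deg (J i :\ m) = 1%N by move: w'; rewrite edeg; lia.
rewrite /wdeg (bigD1 a) //= => w2.
have ha := deg_pos a.
have R0 : [set z in J i :\ m | z != a] = set0.
  apply/eqP; apply: contraT => /wdeg_pos.
  rewrite /wdeg.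
  have -> : (\sum_(j in [set z in J i :\ m | z != a]) deg j =
             \sum_(j in J i :\ m | j != a) deg j)%N.
    by apply: eq_bigl => z; rewrite !inE.
  move=> h; move: w2 ha h; set t := (\sum_(_ in _ | _) _)%N; lia.
exists a; split; first by move: aR; rewrite !inE => /andP [].
apply/setP => z; rewrite !inE.
case: (eqVneq z m) => [->|zm]; first by rewrite mJ.
case: (eqVneq z a) => [->|za]; first by move: aR; rewrite !inE => /andP [_ ->].
apply/negbTE; apply/negP => zJ.
have : z \in [set z in J i :\ m | z != a] by rewrite !inE zJ zm za.
by rewrite R0 inE.
Qed.

Lemma d1 : d (mono set0) = 0.
Proof.
have := @Hleib 0 (mono set0) (mono set0) homog_one.
rewrite lmul1x expr0 scale1r lmul1x lmulx1 => e.
by have := congr1 (fun z => z - d (mono set0)) e; rewrite /= addrK subrr.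
Qed.

Lemma linZ (c : rat) x : d (c *: x) = c *: d x.
Proof. exact: linearZ. Qed.

Lemma linD x y : d (x + y) = d x + d y.
Proof. exact: linearD. Qed.

Lemma Dsupp_k k : forall S : {set 'I_n}, #|S| = k -> forall U, d (mono S) U != 0 ->
  exists i, [/\ i \in S, act i, [disjoint J i & S :\ i] & U = (S :\ i) :|: J i].
Proof.
elim: k => [|k IH] S cS U.
  by move/eqP: cS; rewrite cards_eq0 => /eqP ->; rewrite d1 ffunE eqxx.
have : S != set0 by rewrite -card_gt0 cS.
case/set0Pn => i iS.
set S' := S :\ i.
have cS' : #|S'| = k by move: cS; rewrite /S' (cardsD1 i S) iS => -[].
have dis : [disjoint [set i] & S'] by rewrite disjoints1 !inE eqxx.
have eS : mono S = (sg [set i] S')^-1 *: lmul (gen i) (mono S').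
  rewrite /gen lmul_mono scalerA mulVf ?scale1r; last first.
    by rewrite /sg dis wsign_nz.
  by rewrite setD1K.
rewrite eS linZ (@Hleib _ _ (mono S') (@homog_gen i)) scaleE addE.
rewrite mulf_eq0 negb_or => /andP [_].
case: (eqVneq (lmul (d (gen i)) (mono S') U) 0) => [->|h1]; last first.
  move=> _; case/supp_lmul: h1 => A [T [hA hT dAT ->]].
  have eA := F1 hA; have eT := mono_nz hT.
  exists i; split => //; first exact: act_of hA.
    by move: dAT; rewrite eA eT.
  by rewrite eA eT setUC.
rewrite add0r scaleE mulf_eq0 negb_or => /andP [_].
case/supp_lmul => A [T [hA hT dAT ->]].
have eA := mono_nz hA.
have [k0 [k0S' ak0 dk0 eT]] := IH S' cS' T hT.
have k0S : k0 \in S by move: k0S'; rewrite !inE => /andP [].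
have k0i : k0 != i by move: k0S'; rewrite !inE => /andP [].
have iJ : i \notin J k0.
  apply/negP => iJ; move: dAT; rewrite eA disjoints1 eT !inE iJ.
  by rewrite orbT.
exists k0; split => //.
  rewrite -setI_eq0; apply/eqP/setP => z; rewrite !inE.
  case: (eqVneq z k0) => [_|zk0]; first by rewrite andbF.
  case: (eqVneq z i) => [->|zi]; first by rewrite (negbTE iJ).
  apply/negbTE/negP => /andP [zJ zS].
  by have := disjointFr dk0 zJ; rewrite !inE zk0 zi zS.
rewrite eA eT; apply/setP => z; rewrite !inE.
case: (eqVneq z i) => [->|zi]; first by rewrite eq_sym k0i iS.
case: (eqVneq z k0) => [->|zk0] //=.
Qed.

Lemma Dsupp S U : d (mono S) U != 0 ->
  exists i, [/\ i \in S, act i, [disjoint J i & S :\ i] & U = (S :\ i) :|: J i].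
Proof. exact: (Dsupp_k (erefl #|S|)). Qed.

Section Filt.
Variable Wf : nat -> {vspace LW n}.
Hypothesis HWsub : forall k, (Wf k <= Wsp n)%VS.
Variable N : nat.
Hypothesis HN : Wf N = Wsp n.
Hypothesis HW0 : forall x, x \in Wf 0 -> d x = 0.
Hypothesis HWs : forall k x, x \in Wf k.+1 -> d x \in Lam (Wf k).

Definition Tk a x := La a (d x).

Lemma Tk_Wf k a x : x \in Wf k.+1 -> Tk a x \in Wf k.
Proof. by move=> xW; apply: La_Lam => //; apply: HWs. Qed.

Lemma Tk_W0 a x : x \in Wf 0 -> Tk a x = 0.
Proof. by move=> xW; rewrite /Tk HW0 // La0. Qed.

Lemma TkZ a (c : rat) x : Tk a (c *: x) = c *: Tk a x.
Proof. by rewrite /Tk linZ LaZ. Qed.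

Definition iterT (s : seq 'I_n) x := foldl (fun y a => Tk a y) x s.

Lemma iterTZ s (c : rat) x : iterT s (c *: x) = c *: iterT s x.
Proof. by elim: s x => [|a s IH] x //=; rewrite TkZ IH. Qed.

Lemma iterT0 s : iterT s 0 = 0.
Proof. by have := iterTZ s 0 0; rewrite !scale0r. Qed.

Lemma killed k : forall x, x \in Wf k -> forall s, size s = k.+1 -> iterT s x = 0.
Proof.
elim: k => [|k IH] x xW [|a s] //= hs.
  by case: s hs => // _; rewrite Tk_W0.
by apply: IH; [apply: Tk_Wf | case: hs].
Qed.

Definition killb k x := [forall t : k.-tuple 'I_n, iterT t x == 0].

Lemma gen_WN i : gen i \in Wf N.
Proof. by rewrite HN; apply: memv_span; apply: map_f; rewrite mem_enum. Qed.

Lemma killN i : killb N.+1 (gen i).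
Proof.
apply/forallP => t; apply/eqP; apply: (killed (gen_WN i)).
by rewrite size_tuple.
Qed.

Lemma exk i : exists k, killb k (gen i).
Proof. by exists N.+1; apply: killN. Qed.

Definition lam i := ex_minn (exk i).

Lemma lam_kill i : killb (lam i) (gen i).
Proof. by rewrite /lam; case: ex_minnP. Qed.

Lemma lam_min i k : killb k (gen i) -> (lam i <= k)%N.
Proof. by rewrite /lam; case: ex_minnP => m _ h /h. Qed.

Lemma lam_le i : (lam i <= N.+1)%N.
Proof. exact/lam_min/killN. Qed.

Lemma gen_nz (i : 'I_n) : gen i != 0.
Proof.
apply/eqP => /ffunP /(_ [set i]); rewrite /gen monoE eqxx ffunE => /eqP.
by rewrite oner_eq0.
Qed.

Lemma La_mono2 (a m : 'I_n) : a != m -> La a (mono [set m; a]) = wsign [set a] [set m] *: gen m.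
Proof.
move=> am; rewrite /La (bigD1 m) 1?eq_sym //= big1 ?addr0.
  by rewrite monoE -(setUC [set a]) eqxx mulr1n mulr1.
move=> k /andP [ka km]; rewrite monoE set2_eq; last by rewrite eq_sym.
by rewrite (eq_sym a k) (negbTE ka) (eq_sym m k) (negbTE km) !andbF mulr0n mulr0 scale0r.
Qed.

Lemma killbP k x : killb k x -> forall s, size s = k -> iterT s x = 0.
Proof.
move=> /forallP h s hs; apply/eqP.
by have := h (Tuple (introT eqP hs)).
Qed.

Lemma edge_eq i m : act i -> m \in J i -> deg m = deg i -> (lam m < lam i)%N.
Proof.
move=> ai mJ e; have [a [am eJ]] := (F4 ai mJ).2 e.
set v := d (gen i) (J i).
have v0 : v != 0 := actJ ai.
have eT : Tk a (gen i) = (v * wsign [set a] [set m]) *: gen m.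
  by rewrite /Tk dgenE LaZ -/v eJ La_mono2 // scalerA.
set c := v * _ in eT.
have c0 : c != 0 by rewrite mulf_neq0 // wsign_nz.
have lpos : (0 < lam i)%N.
  rewrite lt0n; apply/negP => /eqP l0.
  have := killbP (lam_kill i) (s := [::]); rewrite l0 => /(_ erefl) /= gi.
  by move: (gen_nz i); rewrite gi eqxx.
suff : (lam m <= (lam i).-1)%N by lia.
apply: lam_min; apply/forallP => t; apply/eqP.
have -> : gen m = c^-1 *: Tk a (gen i) by rewrite eT scalerA mulVf // scale1r.
rewrite iterTZ.
have -> : iterT t (Tk a (gen i)) = iterT (a :: t) (gen i) by [].
rewrite (killbP (lam_kill i)) ?scaler0 //=.
by rewrite size_tuple; lia.
Qed.

Definition rk i := (deg i * N.+2 + lam i)%N.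

Lemma rank_edge i m : act i -> m \in J i -> (rk m < rk i)%N.
Proof.
move=> ai mJ; have [le eqc] := F4 ai mJ.
rewrite /rk.
case: (ltngtP (deg m) (deg i)) => h.
- have h2 : ((deg m).+1 * N.+2 <= deg i * N.+2)%N by rewrite leq_mul2r h orbT.
  have := lam_le m; move: h2; rewrite mulSn; lia.
- by move: le; rewrite leqNgt h.
- by have := edge_eq ai mJ h; rewrite h; lia.
Qed.

Lemma notJ i : act i -> i \notin J i.
Proof. by move=> ai; apply/negP => /(rank_edge ai); rewrite ltnn. Qed.

Lemma closed_valid T : validD J act setT T -> d (mono T) = 0.
Proof.
case/and3P => _ /forall_inP cl _.
apply/ffunP => U; rewrite [RHS]ffunE; apply/eqP; apply: contraT => h.
have [i [iT ai dis eU]] := Dsupp h.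
have := cl i iT; rewrite ai /= -setI_eq0 => /set0Pn [z]; rewrite inE => /andP [zJ zT].
have zi : z != i by apply/eqP => ezi; move: zJ; rewrite ezi (negbTE (notJ ai)).
by have := disjointFr dis zJ; rewrite !inE zi zT.
Qed.

Lemma unhit_valid T x : validD J act setT T -> d x T = 0.
Proof.
case/and3P => _ _ /forall_inP un.
rewrite (decomp x) raddf_sum sum_ffunE; apply: big1 => S _.
change (d (x S *: mono S) T = 0); rewrite linZ scaleE.
case: (eqVneq (d (mono S) T) 0) => [->|h]; first by rewrite mulr0.
have [i [iS ai dis eT]] := Dsupp h.
have iT : i \notin T.
  by rewrite eT !inE eqxx /= (negbTE (notJ ai)).
have := un i; rewrite !inE iT ai /= => /(_ isT).
by rewrite eT subsetUr.
Qed.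

Hypothesis Hdd : forall x, d (d x) = 0.

Lemma final : (n <= cohom_dim d)%N.
Proof.
set Vs := [set T | validD J act setT T].
have dT : downc J act setT by apply/forall_inP => i _; apply/implyP => _; apply: subsetT.
have cnt : (n < #|Vs|)%N.
  have := count_valid rank_edge J2 (cardsT _) dT.
  by rewrite card_ord.
set X := [seq mono T | T <- enum Vs].
set Vsp := <<X>>%VS.
have fX : free X.
  apply/freeP => k hk i.
  have sX : size X = size (enum Vs) by rewrite size_map.
  have := congr1 (fun f : LW n => f (nth set0 (enum Vs) i)) hk.
  rewrite sum_ffunE ffunE (bigD1 i) //= big1 ?addr0.
    rewrite scaleE (nth_map set0) ?monoE ?eqxx ?mulr1n ?mulr1 //.
    by rewrite -cardE ltn_ord.
  move=> j ji; rewrite scaleE (nth_map set0) ?monoE; last by rewrite -cardE ltn_ord.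
  rewrite nth_uniq ?enum_uniq ?mulr0n ?mulr0 //; try by rewrite -cardE ltn_ord.
  have ij : ((i : nat) == j) = false by apply/negbTE; rewrite eq_sym; exact: ji.
  by rewrite ij mulr0n mulr0.
have dV : \dim Vsp = #|Vs| by move/eqP: fX; rewrite /Vsp => ->; rewrite size_map cardE.
have ker : (Vsp <= lker d)%VS.
  apply/span_subvP => v /mapP [T]; rewrite mem_enum inE => vT ->.
  by rewrite memv_ker closed_valid.
have imk : (limg d <= lker d)%VS.
  by apply/subvP => v /memv_imgP [u _ ->]; rewrite memv_ker Hdd.
have cap : (Vsp :&: limg d)%VS = 0%VS.
  apply/eqP; rewrite -subv0; apply/subvP => y /memv_capP [yV yI]; rewrite memv0.
  apply/eqP/ffunP => S; rewrite [RHS]ffunE.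
  case: (eqVneq (y S) 0) => // h.
  have SV : S \in Vs.
    apply: (span_supp (P := fun S => S \in Vs) yV) h => v /mapP [T].
    by rewrite mem_enum => TV -> S' /mono_nz ->.
  case/memv_imgP: yI => u _ eu.
  by move: h; rewrite eu unhit_valid ?eqxx //; move: SV; rewrite inE.
have := dimvS (_ : (Vsp + limg d <= lker d)%VS).
rewrite dimv_disjoint_sum // subv_add ker imk => /(_ isT).
rewrite /cohom_dim dV; lia.
Qed.

End Filt.

End Main.

Unset Implicit Arguments.

Theorem mainTheorem2 (n : nat) (deg : 'I_n -> nat) (d : 'End(LW n)) :
  (* W concentrated in odd degrees *)
  (forall i, odd (deg i)) ->
  sullivan_algebra deg d ->
  (* each d w_i is a scalar multiple of a product of basis elements *)
  (forall i : 'I_n, exists (c : rat) (s : seq 'I_n),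
      d (gen i) = c *: lprod [seq gen j | j <- s]) ->
  (n <= cohom_dim d)%N.
Proof.
move=> Hodd [Hhom [Hleib [Hdd [Wf [_ [HWsub [[N HN] [HW0 HWs]]]]]]]] Hmon.
exact: (final Hodd Hhom Hleib Hmon HWsub HN HW0 HWs Hdd).
Qed.
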